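(* The retract variety $\mathbf V(\underline 2,\underline 3)$ is not principal: there is no monounary algebra $A$ with $\mathbf V(A)=\mathbf V(\underline 2,\underline 3)$.
   Context: A monounary algebra is a pair $(A,f)$ with $A$ a nonempty set and $f:A\to A$; direct products are formed coordinatewise. A retract of $A$ is a nonempty subalgebra $M$ such that there is an endomorphism $h:A\to M$ with $h(x)=x$ for all $x\in M$. A retract variety is a class of algebras closed under isomorphisms, retracts and direct products (of set-indexed families); $\mathbf V(\mathcal K)$ denotes the smallest retract variety containing $\mathcal K$, and $\mathbf V(A_1,\dots,A_n)=\mathbf V(\{A_1,\dots,A_n\})$. For $n\in\mathbb N$, $\underline n=(\mathbb Z_n,f)$ with $f(k)=k+1 \pmod n$ (an $n$-element cycle). *)

(* Defs.v *)
From mathcomp Require Import all_boot.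
Set Implicit Arguments. Unset Strict Implicit. Unset Printing Implicit Defensive.

Record Alg := MkAlg {
  carrier :> Type;
  op : carrier -> carrier;
  alg_nonempty : inhabited carrier }.

Definition hom (A B : Alg) (h : A -> B) : Prop :=
  forall x, h (@op A x) = @op B (h x).

Definition iso (A B : Alg) : Prop :=
  exists h : A -> B, hom h /\ bijective h.

Definition op_closed (A : Alg) (S : A -> Prop) : Prop :=
  forall x, S x -> S (@op A x).

Definition subalg (A : Alg) (S : A -> Prop) (HS : op_closed S)
  (Hne : inhabited {x : A | S x}) : Alg :=
  {| carrier := {x : A | S x};
     op := fun x => exist S (@op A (proj1_sig x)) (HS _ (proj2_sig x));
     alg_nonempty := Hne |}.

Definition is_retract (A : Alg) (S : A -> Prop) : Prop :=
  exists h : A -> A, [/\ hom h, (forall x, S (h x)) & (forall x, S x -> h x = x)].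

Definition prodalg (I : Type) (F : I -> Alg)
  (Hne : inhabited (forall i, F i)) : Alg :=
  {| carrier := forall i, F i;
     op := fun x i => @op (F i) (x i);
     alg_nonempty := Hne |}.

Definition retract_variety (C : Alg -> Prop) : Prop :=
  [/\ (forall A B, C A -> iso A B -> C B),
      (forall (A : Alg) (S : A -> Prop) (HS : op_closed S)
              (Hne : inhabited {x : A | S x}),
          C A -> is_retract S -> C (subalg HS Hne))
    & (forall (I : Type) (F : I -> Alg) (Hne : inhabited (forall i, F i)),
          (forall i, C (F i)) -> C (prodalg Hne))].

Definition V (K : Alg -> Prop) : Alg -> Prop :=
  fun A => forall C, retract_variety C -> (forall B, K B -> C B) -> C A.

(* the n-element cycle (Z_n, k |-> k+1 mod n), meaningful for n >= 1 *)
Definition cycle_alg (n : nat) : Alg :=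
  {| carrier := 'I_(n.-1).+1;
     op := fun k => ordS k;
     alg_nonempty := inhabits ord0 |}.

(* Main.v *)
Require Import Defs.
From mathcomp Require Import all_boot.
From Stdlib Require Import ProofIrrelevance FunctionalExtensionality ClassicalEpsilon.

Definition E2 (B : Alg) : Prop := exists x : B, op (op x) = x.
Definition C2 (B : Alg) : Prop := forall x : B, op (op x) = x -> op x = x.

Lemma sig_eq (A : Type) (S : A -> Prop) (x y : {a | S a}) :
  proj1_sig x = proj1_sig y -> x = y.
Proof.
case: x => a Ha; case: y => b Hb /= Hab; subst b.
by rewrite (proof_irrelevance _ Ha Hb).
Qed.

Lemma E2_rv : retract_variety E2.
Proof.
split.
- move=> A B [x Hx] [h [Hh _]]; exists (h x).
  by rewrite -!Hh Hx.
- move=> A S HS Hne [x Hx] [h [Hh HhS _]].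
  exists (exist S (h x) (HhS x)); apply: sig_eq => /=.
  by rewrite -!Hh Hx.
- move=> I F Hne HF.
  pose g := fun i => proj1_sig (constructive_indefinite_description _ (HF i)).
  exists (g : forall i, F i).
  apply: functional_extensionality_dep => i /=.
  rewrite /g; exact: (proj2_sig (constructive_indefinite_description _ (HF i))).
Qed.

Lemma C2_rv : retract_variety C2.
Proof.
split.
- move=> A B HA [h [Hh [g hg gh]]] y Hy.
  have Hx : op (op (g y)) = g y.
    apply: (can_inj hg); by rewrite !Hh gh.
  have := HA _ Hx => Hfx.
  by rewrite -{1}(gh y) -Hh Hfx gh.
- move=> A S HS Hne HA _ x Hx; apply: sig_eq => /=.
  apply: HA; exact: (f_equal (@proj1_sig _ _) Hx).
- move=> I F Hne HF x Hx.
  apply: functional_extensionality_dep => i /=.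
  apply: HF; exact: (equal_f_dep Hx i).
Qed.

Lemma not_E2_3 : ~ E2 (cycle_alg 3).
Proof.
move=> [[[|[|[|m]]] Hm] H] //; move: H => /(f_equal val) //=.
Qed.

Lemma not_C2_2 : ~ C2 (cycle_alg 2).
Proof.
move=> H.
have E : op (op (ord0 : cycle_alg 2)) = ord0 by apply: val_inj.
by move: (H _ E) => /(f_equal val).
Qed.

Theorem proposition2p1 :
  ~ exists A : Alg,
      forall B : Alg,
        V (fun X => X = A) B <->
        V (fun X => X = cycle_alg 2 \/ X = cycle_alg 3) B.
Proof.
move=> [A HA].
have VA : V (fun X => X = cycle_alg 2 \/ X = cycle_alg 3) A.
  by apply/HA => C _ H; apply: H.
have V2 : V (fun X => X = A) (cycle_alg 2).
  by apply/HA => C _ H; apply: H; left.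
have V3 : V (fun X => X = A) (cycle_alg 3).
  by apply/HA => C _ H; apply: H; right.
have nE : ~ E2 A.
  move=> HE; apply: not_E2_3; apply: V3 E2_rv _ => B ->; exact HE.
have HC : C2 A by move=> x Hx; case: nE; exists x.
apply: not_C2_2; apply: V2 C2_rv _ => B ->; exact HC.
Qed.
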